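(* Let $m > 1$ be an integer and $a$ a non-negative integer. Then the congruence class of $a$ modulo $m$ contains infinitely many $\pi/4$-congruent numbers that are pairwise inequivalent modulo $(\mathbb{Q}^\times)^2$. The same statement holds for $3\pi/4$-congruent numbers.
   Context: For $\theta \in \{\pi/4,3\pi/4\}$, a positive integer $n$ is $\theta$-congruent if there exist positive rationals $a,b,c$ such that the triangle with sides $a$, $b\sqrt2$, $c$ has angle $\theta$ opposite $c$ and area $n$; equivalently $ab = 2n$ and $c^2 = a^2+2b^2-2ab$ (for $\theta = \pi/4$), resp. $c^2 = a^2+2b^2+2ab$ (for $\theta=3\pi/4$). *)

(* Defs.v *)
From mathcomp Require Import all_boot all_order all_algebra.
Set Implicit Arguments. Unset Strict Implicit. Unset Printing Implicit Defensive.
Import Order.TTheory GRing.Theory Num.Theory.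
Local Open Scope ring_scope.

Inductive angle := PiOver4 | ThreePiOver4.

(* cos(theta) * sqrt 2 * 2: the law of cosines term for sides a, b*sqrt2 with
   angle theta between them is  c^2 = a^2 + 2 b^2 - 2 * a * (b sqrt 2) cos theta,
   i.e. -2ab for pi/4 and +2ab for 3pi/4. *)
Definition cos_sign (t : angle) : rat :=
  match t with PiOver4 => 1 | ThreePiOver4 => -1 end.

Definition theta_congruent (t : angle) (n : nat) : Prop :=
  (0 < n)%N /\
  exists a b c : rat, 0 < a /\ 0 < b /\ 0 < c /\
    a * b = 2 * n%:R /\
    c ^+ 2 = a ^+ 2 + 2 * b ^+ 2 - 2 * cos_sign t * a * b.

Definition sq_class_equiv (n n' : nat) : Prop :=
  exists q : rat, q != 0 /\ (n%:R : rat) = q ^+ 2 * n'%:R.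

(* Main.v *)
Require Import Defs.
From mathcomp Require Import all_boot all_order all_algebra.
From mathcomp Require Import zify ring lra.
Set Implicit Arguments. Unset Strict Implicit. Unset Printing Implicit Defensive.
Import Order.TTheory GRing.Theory Num.Theory.

Definition PP (m Y : nat) := m * m * Y.
Definition XX t m Y := match t with PiOver4 => (PP m Y).+1 | ThreePiOver4 => (PP m Y).-1 end.
Definition hh t m Y := XX t m Y * XX t m Y - 2.

Lemma PP_ge m Y : (1 < m)%N -> (0 < Y)%N -> (4 <= PP m Y)%N.
Proof. rewrite /PP; nia. Qed.

Lemma XX_ge t m Y : (1 < m)%N -> (0 < Y)%N -> (3 <= XX t m Y)%N.
Proof. move=> hm hY; have := PP_ge hm hY; case: t => /=; lia. Qed.

Lemma hh_eq t m Y : (1 < m)%N -> (0 < Y)%N ->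
  hh t m Y + 1 = PP m Y * (match t with PiOver4 => (PP m Y).+2 | ThreePiOver4 => (PP m Y) - 2 end).
Proof. move=> hm hY; have := PP_ge hm hY; rewrite /hh; case: t => /=; nia. Qed.

Lemma hh_dvd t m Y : (1 < m)%N -> (0 < Y)%N -> PP m Y %| hh t m Y + 1.
Proof. move=> hm hY; rewrite hh_eq //; exact: dvdn_mulr. Qed.

Lemma hh_nsq t m Y g : (1 < m)%N -> (0 < Y)%N -> hh t m Y <> g * g.
Proof.
move=> hm hY; have := XX_ge t hm hY; rewrite /hh; set X := XX t m Y => hX E.
have [hg|hg] := leqP X g; nia.
Qed.

Lemma coprime_succ d x : d %| x + 1 -> coprime x d.
Proof.
move=> hd; apply: (coprime_dvdr hd); rewrite addn1 coprime_sym; exact: coprimeSn.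
Qed.

Lemma sq_coprime x y z : coprime x y -> x * y = z * z -> exists g, x = g * g.
Proof.
move=> cxy E.
have [g0|gpos] := posnP (gcdn x z).
  exists 0; have := dvdn_gcdl x z; rewrite g0 dvd0n => /eqP ->; done.
set g := gcdn x z.
move: gpos; rewrite -/g => gpos.
have [x' Ex] : exists x', x = x' * g by apply/dvdnP; exact: dvdn_gcdl.
have [z' Ez] : exists z', z = z' * g by apply/dvdnP; exact: dvdn_gcdr.
have cxz : coprime x' z'.
  rewrite /coprime -(eqn_pmul2r gpos) mul1n muln_gcdl -Ex -Ez //.
have gx : g %| x by exact: dvdn_gcdl.
clearbody g.
have E2 : x' * y = g * (z' * z').
  apply/eqP; rewrite -(eqn_pmul2r gpos); apply/eqP.
  move: E; rewrite Ex Ez => E; rewrite mulnAC E; ring.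
have h1 : x' %| g.
  have : x' %| g * (z' * z') by rewrite -E2 dvdn_mulr.
  by rewrite Gauss_dvdl // coprimeMr cxz.
have cgy : coprime g y by exact: coprime_dvdl cxy.
have h2 : g %| x'.
  have : g %| x' * y by rewrite E2 dvdn_mulr.
  by rewrite Gauss_dvdl.
exists g; rewrite Ex; congr (_ * _); apply/eqP; by rewrite eqn_dvd h1 h2.
Qed.
Local Open Scope ring_scope.
Lemma rat_sq (N : nat) (r : rat) : N%:R = r ^+ 2 -> exists k, N = (k * k)%N.
Proof.
move=> H.
have hd : ((denq r)%:~R : rat) != 0%R by rewrite intr_eq0; apply: lt0r_neq0; exact: denq_gt0.
have E1 : ((N%:Z * denq r ^+ 2)%:~R : rat) = ((numq r) ^+ 2)%:~R.
  rewrite rmorphM rmorphXn /= rmorphXn /= -pmulrn H -{1}(divq_num_den r).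
  by field.
move/intr_inj: E1 => E1.
have E2 : (N * (`|denq r| * `|denq r|) = `|numq r| * `|numq r|)%N.
  by rewrite -!abszM -!expr2 -E1 abszM.
have cp := coprime_num_den r.
set u := `|numq r|%N in E2 cp; set e := `|denq r|%N in E2 cp.
have cp' : coprime e u by rewrite coprime_sym.
have eu : (e %| u)%N.
  rewrite -(@Gauss_dvdr e u u cp') -E2; apply: dvdn_mull; apply: dvdn_mulr; exact: dvdnn.
have : coprime e e by exact: (coprime_dvdl eu cp).
rewrite /coprime gcdnn => /eqP e1.
exists u; rewrite -E2 e1.
by rewrite !muln1.
Qed.
Local Close Scope ring_scope.

Definition Yof y0 s := y0 * (s * s).
Fixpoint HH t m y0 j := match j with 0 => 1 | j'.+1 => HH t m y0 j' * hh t m (Yof y0 (HH t m y0 j')) end.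
Definition ff t m y0 j := Yof y0 (HH t m y0 j) * hh t m (Yof y0 (HH t m y0 j)).

Lemma hh_pos t m Y : (1 < m)%N -> (0 < Y)%N -> (0 < hh t m Y)%N.
Proof. move=> hm hY; have := XX_ge t hm hY; rewrite /hh; nia. Qed.

Lemma Y_pos y0 s : 0 < y0 -> 0 < s -> 0 < Yof y0 s.
Proof. by move=> h1 h2; rewrite /Yof !muln_gt0 h1 h2. Qed.

Lemma HH_pos t m y0 j : 1 < m -> 0 < y0 -> 0 < HH t m y0 j.
Proof.
move=> hm hy; elim: j => //= j IH; rewrite muln_gt0 IH /=.
by apply: hh_pos => //; apply: Y_pos.
Qed.

Lemma m_dvd_hh t m Y : 1 < m -> 0 < Y -> m %| hh t m Y + 1.
Proof.
move=> hm hY; apply: dvdn_trans (hh_dvd t hm hY).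
by rewrite /PP -mulnA dvdn_mulr.
Qed.

Lemma sq1 m x : 0 < x -> m %| x + 1 -> x * x = 1 %[mod m].
Proof.
move=> hx hd; apply/eqP; rewrite eqn_mod_dvd; last by nia.
have -> : x * x - 1 = (x - 1) * (x + 1) by nia.
exact: dvdn_mull.
Qed.

Lemma HH_sq t m y0 j : 1 < m -> 0 < y0 -> HH t m y0 j * HH t m y0 j = 1 %[mod m].
Proof.
move=> hm hy; elim: j => //= j IH.
set H := HH t m y0 j; set h := hh t m (Yof y0 H).
have hY : 0 < Yof y0 H by apply: Y_pos => //; apply: HH_pos.
have hs : h * h = 1 %[mod m] by apply: sq1; [exact: hh_pos | exact: m_dvd_hh].
have -> : H * h * (H * h) = (H * H) * (h * h) by ring.
by rewrite -modnMm IH hs modnMm.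
Qed.

Lemma HH_dvd t m y0 i j : i <= j -> HH t m y0 i %| HH t m y0 j.
Proof.
elim: j => [|j IH]; first by rewrite leqn0 => /eqP ->.
rewrite leq_eqVlt => /orP[/eqP -> //|]; rewrite ltnS => hij /=.
exact: dvdn_mulr (IH hij).
Qed.

Lemma hh_dvd_HH t m y0 i j : i < j -> hh t m (Yof y0 (HH t m y0 i)) %| HH t m y0 j.
Proof. move=> hij; apply: dvdn_trans (HH_dvd t m y0 hij) => /=; exact: dvdn_mull. Qed.

Lemma notsq t m y0 i j : 1 < m -> 0 < y0 -> i < j -> ~ exists k, ff t m y0 i * ff t m y0 j = k * k.
Proof.
move=> hm hy hij [k Ek].
set Yi := Yof y0 (HH t m y0 i) in Ek; set Yj := Yof y0 (HH t m y0 j) in Ek.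
set hi := hh t m Yi in Ek; set hj := hh t m Yj in Ek.
have hYj : 0 < Yj by apply: Y_pos => //; apply: HH_pos.
have dP : PP m Yj %| hj + 1 by exact: hh_dvd.
have YP : Yj %| PP m Yj by rewrite /PP dvdn_mull.
have sY : HH t m y0 j %| Yj by rewrite /Yj /Yof dvdn_mull // dvdn_mulr.
have c1 : coprime hj Yj by apply: coprime_succ; exact: dvdn_trans YP dP.
have c2 : coprime hj Yi.
  apply: coprime_succ; apply: dvdn_trans dP; apply: dvdn_trans YP.
  by rewrite /Yi /Yj /Yof dvdn_mul // dvdn_mul // HH_dvd // ltnW.
have c3 : coprime hj hi.
  apply: coprime_succ; apply: dvdn_trans dP; apply: dvdn_trans YP.
  apply: dvdn_trans sY; exact: hh_dvd_HH.
have E : hj * (Yi * hi * Yj) = k * k by rewrite -Ek /ff -/Yi -/Yj -/hi -/hj; ring.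
have cc : coprime hj (Yi * hi * Yj).
  rewrite coprimeMr c1 andbT coprimeMr c2 c3 //.
have [g Eg] := sq_coprime cc E.
by apply: (hh_nsq hm hYj Eg).
Qed.

Lemma ff_mod t m a j : 1 < m -> ff t m (m - a %% m) j = a %[mod m].
Proof.
move=> hm; set y0 := m - a %% m.
have am : a %% m < m by rewrite ltn_pmod // ltnW.
have hy : 0 < y0 by rewrite /y0 subn_gt0.
set Y := Yof y0 (HH t m y0 j).
have hY : 0 < Y by apply: Y_pos => //; apply: HH_pos.
have d1 : (ff t m y0 j + Y) %% m = 0.
  have e : ff t m y0 j + Y = Y * (hh t m Y + 1) by rewrite /ff -/Y mulnDr muln1.
  apply/eqP; change (m %| ff t m y0 j + Y); rewrite e.
  exact: dvdn_mull (m_dvd_hh t hm hY).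
have d2 : (a + Y) %% m = 0.
  rewrite /Y /Yof -modnDmr -modnMmr HH_sq // modnMmr modnDmr muln1.
  have -> : a + y0 = (a %/ m).+1 * m.
    by rewrite /y0 {1}(divn_eq a m); lia.
  exact: modnMl.
by apply/eqP; rewrite -(eqn_modDr Y) d1 d2.
Qed.

Local Open Scope ring_scope.
Lemma tri t m Y : (1 < m)%N -> (0 < Y)%N -> theta_congruent t (Y * hh t m Y).
Proof.
move=> hm hY; split; first by rewrite muln_gt0 hY hh_pos.
have hP := PP_ge hm hY; have hX := XX_ge t hm hY.
set P := PP m Y in hP *.
have mq : (0 : rat) < m%:R by rewrite ltr0n ltnW.
have hq : (0 : rat) < (hh t m Y)%:R by rewrite ltr0n hh_pos.
have Pq : (0 : rat) < P%:R by rewrite ltr0n; lia.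
have Pdef : (P%:R : rat) = m%:R * m%:R * Y%:R by rewrite /P /PP !natrM.
have hdef : ((hh t m Y)%:R : rat) = (XX t m Y)%:R ^+ 2 - 2.
  by rewrite /hh natrB ?expr2 ?natrM //; nia.
have Xdef : ((XX t m Y)%:R : rat) = P%:R + cos_sign t.
  clear hq; case: t hX hdef => /= hX hdef; first by rewrite -/P natr1.
  by rewrite -/P -subn1 natrB //; lia.
exists ((hh t m Y)%:R / m%:R), (2 * P%:R / m%:R), ((P%:R ^+ 2 + 1) / m%:R).
split; first by apply: divr_gt0.
split; first by apply: divr_gt0 => //; lra.
split; first by apply: divr_gt0 => //; nra.
have m0 : (m%:R : rat) != 0 by rewrite lt0r_neq0.
split.
  rewrite natrM Pdef; field; exact: m0.
rewrite hdef Xdef; clear hq; case: t {hX hdef Xdef} => /=; field; exact: m0.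
Qed.
Local Close Scope ring_scope.

Theorem theorem5p2 (m a : nat) :
  (1 < m)%N ->
  forall t : angle,
  exists f : nat -> nat,
    (forall i, theta_congruent t (f i) /\ f i = a %[mod m]) /\
    (forall i j, i <> j -> ~ sq_class_equiv (f i) (f j)).
Proof.
move=> hm t; set y0 := m - a %% m.
have am : a %% m < m by rewrite ltn_pmod // ltnW.
have hy : 0 < y0 by rewrite /y0 subn_gt0.
exists (ff t m y0); split.
  move=> i; split; last exact: ff_mod.
  apply: tri => //; apply: Y_pos => //; exact: HH_pos.
move=> i j nij [q [q0 E]].
have E' : ((ff t m y0 i * ff t m y0 j)%N%:R : rat) = ((q * (ff t m y0 j)%:R) ^+ 2)%R.
  by rewrite natrM E exprMn expr2 !mulrA.
have [k Ek] := rat_sq E'.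
have [lt|lt] : (i < j) \/ (j < i) by lia.
  by apply: (notsq (t:=t) hm hy lt); exists k.
by apply: (notsq (t:=t) hm hy lt); exists k; rewrite mulnC.
Qed.
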